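(* (i) Let $1\le k\le n$ and let $f:\mathbb{F}_2^n\to\mathbb{F}_2$ have algebraic degree $k$. Define $g:\mathbb{F}_2^{n+1}\to\mathbb{F}_2$ by $g(x_1,\dots,x_n,x_{n+1})=x_{n+1}f(x_1,\dots,x_n)$. Then $\mathrm{dt}_{k+1}(g)=\big(1-\frac{1}{2^{k+1}}\big)\mathrm{dt}_k(f)$. (ii) Let $1\le k\le n/2$ and let $f:\mathbb{F}_2^n\to\mathbb{F}_2$ be homogeneous of degree $k$. Then $\mathrm{add}_{n-k}(f^c)=\mathrm{add}_k(f)$ and \[\mathrm{dt}_{n-k}(f^c)=\mathrm{dt}_k(f)\prod_{i=k+1}^{n-k}\Big(1-\frac{1}{2^i}\Big).\]
   Context: $\oplus$ denotes addition in $\mathbb{F}_2$ and $\mathbb{F}_2^N$. Every Boolean function $f:\mathbb{F}_2^N\to\mathbb{F}_2$ has a unique algebraic normal form (ANF): a polynomial over $\mathbb{F}_2$ of degree at most one in each variable representing $f$; its degree is the algebraic degree of $f$, and $f$ is homogeneous of degree $k$ if its ANF is nonzero and contains only monomials of degree $k$. For $1\le k\le N$, \[\mathrm{dt}_k(f)=\frac{\big|\{(u_0,\dots,u_k)\in(\mathbb{F}_2^N)^{k+1}:\ \bigoplus_{c_1,\dots,c_k\in\mathbb{F}_2} f\big((\bigoplus_{i=1}^k c_iu_i)\oplus u_0\big)\neq0\}\big|}{2^{(k+1)N}}.\] For $M\in GL(N,\mathbb{F}_2)$, $v\in\mathbb{F}_2^N$, $\varphi_{M,v}(x)=Mx\oplus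 v$. $\mathrm{dd}_k(f)$ is the number of degree-$k$ monomials with nonzero coefficient in the ANF of $f$ divided by $\binom Nk$, and $\mathrm{add}_k(f)=\frac{\sum_{M\in GL(N,\mathbb{F}_2),v\in\mathbb{F}_2^N}\mathrm{dd}_k(f\circ\varphi_{M,v})}{2^N(2^N-1)(2^N-2)\cdots(2^N-2^{N-1})}$. If $f$ is homogeneous of degree $k$ in $n$ variables with ANF $\bigoplus_t b_t t$ ($t$ ranging over degree-$k$ monomials in $x_1,\dots,x_n$), its complement is $f^c=\bigoplus_t b_t\,\frac{x_1\cdots x_n}{t}$ (each monomial replaced by the product of the variables not in it). *)

(* Defs.v *)
From mathcomp Require Import all_boot all_order all_algebra.
Set Implicit Arguments. Unset Strict Implicit. Unset Printing Implicit Defensive.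
Import GRing.Theory Num.Theory.
Local Open Scope ring_scope.

Definition vec (N : nat) := 'cV['F_2]_N.
Definition boolfun (N : nat) := vec N -> 'F_2.

Definition anf_eval (N : nat) (a : {ffun {set 'I_N} -> 'F_2}) : boolfun N :=
  fun x => \sum_(S : {set 'I_N}) a S * \prod_(i in S) x i 0.

Definition anf (N : nat) (f : boolfun N) : {ffun {set 'I_N} -> 'F_2} :=
  odflt 0 [pick a : {ffun {set 'I_N} -> 'F_2} | [forall x : vec N, anf_eval a x == f x]].

Definition alg_deg (N : nat) (f : boolfun N) : nat :=
  \max_(S : {set 'I_N} | anf f S != 0) #|S|.

Definition homogeneous (N k : nat) (f : boolfun N) : Prop :=
  anf f != 0 /\ forall S : {set 'I_N}, anf f S != 0 -> #|S| = k.

(* complement: each monomial t replaced by x_1...x_N / t *)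
Definition complement (N : nat) (f : boolfun N) : boolfun N :=
  anf_eval [ffun S : {set 'I_N} => anf f (~: S)].

Definition kderiv (N k : nat) (f : boolfun N) (u0 : vec N) (u : {ffun 'I_k -> vec N}) : 'F_2 :=
  \sum_(c : {ffun 'I_k -> 'F_2}) f ((\sum_(i < k) c i *: u i) + u0).

Definition dt (k N : nat) (f : boolfun N) : rat :=
  (#|[set p : vec N * {ffun 'I_k -> vec N} | kderiv f p.1 p.2 != 0]|%:R
    / (2 ^ ((k + 1) * N))%N%:R)%R.

Definition ddk (k N : nat) (f : boolfun N) : rat :=
  (#|[set S : {set 'I_N} | (#|S| == k) && (anf f S != 0)]|%:R / ('C(N, k))%:R)%R.

Definition affine_comp (N : nat) (f : boolfun N) (M : 'M['F_2]_N) (v : vec N) : boolfun N :=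
  fun x => f (M *m x + v).

Definition addk (k N : nat) (f : boolfun N) : rat :=
  ((\sum_(M : 'M['F_2]_N | M \in unitmx) \sum_(v : vec N) ddk k (affine_comp f M v))
    / ((2 ^ N)%N%:R * \prod_(i < N) ((2 ^ N)%N%:R - (2 ^ i)%N%:R)))%R.

Definition extend_mul (n : nat) (f : boolfun n) : boolfun n.+1 :=
  fun x => x ord_max 0 * f (\col_(i < n) x (widen_ord (leqnSn n) i) 0).

(* Main.v *)
Require Import Defs.
From mathcomp Require Import all_boot all_order all_algebra.
From mathcomp Require Import ring zify.
Set Implicit Arguments. Unset Strict Implicit. Unset Printing Implicit Defensive.
Import GRing.Theory Num.Theory.
Local Open Scope ring_scope.
Lemma F2_cases (x : 'F_2) : x = 0 \/ x = 1.
Proof. by case: x => [[|[|m]] Hm] //; [left|right]; apply: val_inj. Qed.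
Lemma F2_addxx (x : 'F_2) : x + x = 0.
Proof. by case: (F2_cases x) => ->; apply: val_inj. Qed.
Lemma F2_neq0 (x : 'F_2) : x != 0 -> x = 1.
Proof. by case: (F2_cases x) => ->; rewrite ?eqxx. Qed.
Lemma F2_neq1 (x : 'F_2) : x != 1 -> x = 0.
Proof. by case: (F2_cases x) => ->; rewrite ?eqxx. Qed.
Lemma sum_F2 (F : 'F_2 -> 'F_2) : \sum_(a : 'F_2) F a = F 0 + F 1.
Proof. by rewrite /index_enum /= big_ord_recl big_ord_recl big_ord0 addr0; congr (F _ + F _); apply: val_inj. Qed.
Lemma card_F2 : #|'F_2| = 2%N.
Proof. by rewrite card_Fp. Qed.
Lemma F2_oppr (x : 'F_2) : - x = x.
Proof. by case: (F2_cases x) => ->; apply: val_inj. Qed.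

Lemma sum_invol (T : finType) (g : T -> T) (F : T -> 'F_2) :
  involutive g -> (forall x, g x != x) -> (forall x, F (g x) = F x) ->
  \sum_x F x = 0.
Proof.
move=> gK gneq Fg.
rewrite (bigID (fun x => (enum_rank x < enum_rank (g x))%N)) /=.
set A := \sum_(i | _) _.
suff -> : \sum_(i | ~~ (enum_rank i < enum_rank (g i))%N) F i = A by rewrite F2_addxx.
rewrite (reindex_inj (inv_inj gK)) /= /A; apply: eq_big => [x|x _]; last by rewrite Fg.
rewrite gK -leqNgt leq_eqVlt; case: eqP => //= /val_inj/enum_rank_inj E.
by move: (gneq x); rewrite -E eqxx.
Qed.

Lemma prodF2 (I : finType) (S : {pred I}) (x : I -> 'F_2) :
  \prod_(i in S) x i = [forall i in S, x i == 1]%:R.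
Proof.
case: (boolP [forall i in S, x i == 1]) => [/forall_inP H | /forall_inPn [i iS /F2_neq1 xi]].
  by rewrite big1 // => i /H /eqP.
by rewrite (bigD1 i) //= xi mul0r.
Qed.

Section ANF.
Variable n : nat.

Definition ind (T : {set 'I_n}) : vec n := \col_i (i \in T)%:R.
Definition supp (x : vec n) : {set 'I_n} := [set i | x i 0 == 1].

Lemma supp_ind T : supp (ind T) = T.
Proof. by apply/setP => i; rewrite !inE mxE; case: (i \in T). Qed.
Lemma ind_supp x : ind (supp x) = x.
Proof. by apply/matrixP => i j; rewrite !mxE inE (ord1 j); case: (F2_cases (x i 0)) => ->. Qed.

Lemma mono_supp (S : {set 'I_n}) (x : vec n) :
  \prod_(i in S) x i 0 = (S \subset supp x)%:R.
Proof.
rewrite prodF2; congr ((nat_of_bool _)%:R).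
by apply/forall_inP/subsetP => H i /H; rewrite inE.
Qed.

Definition tog (i : 'I_n) (S : {set 'I_n}) := if i \in S then S :\ i else i |: S.
Lemma in_tog i S j : (j \in tog i S) = (if j == i then i \notin S else j \in S).
Proof.
rewrite /tog; case: (boolP (i \in S)) => iS; rewrite !inE;
  case: (eqVneq j i) => [->|] //=; by rewrite iS.
Qed.

Lemma count_between (T U : {set 'I_n}) :
  \sum_(S : {set 'I_n}) ((T \subset S) && (S \subset U))%:R = (T == U)%:R :> 'F_2.
Proof.
case: (eqVneq T U) => [<-|neTU].
  rewrite (bigD1 T) //= subxx big1 ?addr0 // => S /negbTE neST.
  case: (boolP (T \subset S)) => //= TS; case: (boolP (S \subset T)) => //= ST.
  by move: neST; rewrite (_ : S = T) ?eqxx //; apply/eqP; rewrite eqEsubset ST.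
case: (boolP (T \subset U)) => TU; last first.
  rewrite big1 // => S _; case: (boolP (T \subset S)) => //= TS.
  case: (boolP (S \subset U)) => //= SU; by rewrite (subset_trans TS SU) in TU.
have [i iU iT] : exists2 i, i \in U & i \notin T.
  have: ~~ (U \subset T) by apply: contra neTU => UT; rewrite eqEsubset TU UT.
  by case/subsetPn => i; exists i.
apply: (sum_invol (g := tog i)).
- move=> S; apply/setP => j; rewrite !in_tog; case: (eqVneq j i) => [->|] //.
  by rewrite eqxx negbK.
- move=> S; apply/eqP => /setP /(_ i); rewrite in_tog eqxx; by case: (i \in S).
- move=> S; congr ((nat_of_bool _)%:R); congr (_ && _).
  + apply/subsetP/subsetP => H j jT; have := H j jT; rewrite in_tog;
      case: (eqVneq j i) => // ji; by rewrite -ji jT in iT.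
  + apply/subsetP/subsetP => H j; have := H j; rewrite in_tog;
      case: (eqVneq j i) => [->|//] _ _; exact iU.
Qed.

Definition mob (f : boolfun n) : {ffun {set 'I_n} -> 'F_2} :=
  [ffun S : {set 'I_n} => \sum_(T : {set 'I_n} | T \subset S) f (ind T)].

Lemma anf_eval_mob f x : anf_eval (mob f) x = f x.
Proof.
rewrite /anf_eval.
transitivity (\sum_(T : {set 'I_n}) f (ind T) * (T == supp x)%:R); last first.
  by rewrite (bigD1 (supp x)) //= eqxx mulr1 ind_supp big1 ?addr0 // => T /negbTE ->; rewrite mulr0.
under eq_bigr => S _ do rewrite ffunE mono_supp big_distrl /= big_mkcond /=.
rewrite exchange_big /=; apply: eq_bigr => T _.
rewrite -count_between big_distrr /=; apply: eq_bigr => S _.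
by case: (T \subset S); case: (S \subset supp x); rewrite /= ?mulr0 ?mul0r ?mulr1.
Qed.

Lemma mob_anf_eval a : mob (anf_eval a) = a.
Proof.
apply/ffunP => S; rewrite ffunE /anf_eval.
under eq_bigr => T _ do under eq_bigr => R _ do rewrite mono_supp supp_ind.
transitivity (\sum_(T : {set 'I_n}) \sum_(R : {set 'I_n}) a R * ((R \subset T) && (T \subset S))%:R).
  rewrite big_mkcond /=; apply: eq_bigr => T _; case: (T \subset S) => /=.
    by apply: eq_bigr => R _; rewrite andbT.
  by rewrite big1 // => R _; rewrite andbF mulr0.
rewrite exchange_big /=.
transitivity (\sum_(R : {set 'I_n}) a R * (R == S)%:R); last first.
  by rewrite (bigD1 S) //= eqxx mulr1 big1 ?addr0 // => T /negbTE ->; rewrite mulr0.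
by apply: eq_bigr => R _; rewrite -count_between big_distrr.
Qed.

Lemma mob_ext f g : (forall x, f x = g x) -> mob f = mob g.
Proof. by move=> H; apply/ffunP => S; rewrite !ffunE; apply: eq_bigr => T _; rewrite H. Qed.

Lemma anfE f : anf f = mob f.
Proof.
rewrite /anf; case: pickP => [a /forallP H | H] /=.
  by rewrite -(mob_anf_eval a); apply: mob_ext => x; apply/eqP/H.
by move: (H (mob f)) => /negbT /forallPn [x]; rewrite anf_eval_mob eqxx.
Qed.

Lemma anf_evalK (f : boolfun n) (x : vec n) : anf_eval (anf f) x = f x.
Proof. by rewrite anfE anf_eval_mob. Qed.

Lemma anf_uniq (a : {ffun {set 'I_n} -> 'F_2}) (f : boolfun n) : (forall x, anf_eval a x = f x) -> anf f = a.
Proof. by move=> H; rewrite anfE -(mob_anf_eval a); apply: mob_ext => x; rewrite H. Qed.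

End ANF.

Lemma mxF2_opp m p (A : 'M['F_2]_(m, p)) : - A = A.
Proof. by apply/matrixP => i j; rewrite mxE F2_oppr. Qed.
Lemma mxF2_addK m p (A B : 'M['F_2]_(m, p)) : A + B + B = A.
Proof. by rewrite -{2}(mxF2_opp B) addrK. Qed.
Lemma F2_eq_add (x y : 'F_2) : x + y = 0 -> x = y.
Proof. by move=> H; rewrite -[y]F2_oppr; apply/eqP; rewrite -subr_eq0 opprK H. Qed.

Lemma ker_exists m p (B : 'M['F_2]_(m, p)) :
  ~~ row_free B -> exists2 z : 'rV_m, z != 0 & z *m B = 0.
Proof.
rewrite -kermx_eq0 => K0.
case: (pickP (fun i => row i (kermx B) != 0)) => [i Hi | H].
  by exists (row i (kermx B)) => //; rewrite -row_mul mulmx_ker row0.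
case/negP: K0; apply/eqP/row_matrixP => i; rewrite row0; apply/eqP.
by move: (H i) => /negbFE.
Qed.

Lemma sum_unique (T : finType) (c0 : T) : \sum_(c : T) (c == c0)%:R = 1 :> 'F_2.
Proof. by rewrite (bigD1 c0) //= eqxx big1 ?addr0 // => c /negbTE ->. Qed.

Lemma card_set_sum (T : finType) (P : pred T) : #|[set x | P x]| = (\sum_(x : T) P x)%N.
Proof. by rewrite -sum1_card big_mkcond; apply: eq_bigr => x _; rewrite inE; case: (P x). Qed.

Lemma sum_col_mx (m1 m2 p : nat) (F : 'M['F_2]_(m1 + m2, p) -> 'F_2) :
  \sum_(c : 'M_(m1 + m2, p)) F c = \sum_(x : 'M_(m1, p)) \sum_(y : 'M_(m2, p)) F (col_mx x y).
Proof.
rewrite pair_bigA /= (reindex (fun pr : 'M_(m1, p) * 'M_(m2, p) => col_mx pr.1 pr.2)) //=.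
exists (fun c => (usubmx c, dsubmx c)) => [[x y] _|c _] /=.
  by rewrite col_mxKu col_mxKd.
by rewrite vsubmxK.
Qed.

Lemma sum_cV1 (G : 'cV['F_2]_1 -> 'F_2) : \sum_x G x = G 0 + G (const_mx 1).
Proof.
rewrite (reindex (fun a : 'F_2 => const_mx a)) /=; last first.
  exists (fun x : 'cV_1 => x 0 0) => [a _|x _]; first by rewrite mxE.
  by apply/matrixP => i j; rewrite !ord1 mxE.
rewrite sum_F2; congr (G _ + _); by apply/matrixP => i j; rewrite !mxE.
Qed.

Section Mat.
Variable n : nat.

Definition Sfv K (f : boolfun n) (U : 'M['F_2]_(n, K)) (v : vec n) : 'F_2 :=
  \sum_(c : 'cV['F_2]_K) f (U *m c + v).

Definition Es (S : {set 'I_n}) : 'M['F_2]_(n, #|S|) := \matrix_(i, a) (i == enum_val a)%:R.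

Lemma EsT_mul (S : {set 'I_n}) m (Y : 'M['F_2]_(n, m)) a j : ((Es S)^T *m Y) a j = Y (enum_val a) j.
Proof.
rewrite mxE (bigD1 (enum_val a)) //= !mxE eqxx mul1r big1 ?addr0 // => i /negbTE.
by rewrite !mxE => ->; rewrite mul0r.
Qed.

Lemma Es_mul_out (S : {set 'I_n}) m (w : 'M['F_2]_(#|S|, m)) i j : i \notin S -> (Es S *m w) i j = 0.
Proof.
move=> iS; rewrite mxE big1 // => a _; rewrite mxE.
case: eqP => [E|]; last by rewrite mul0r.
by move: iS; rewrite E enum_valP.
Qed.

Lemma EsTEs (S : {set 'I_n}) : (Es S)^T *m Es S = 1%:M.
Proof.
apply/matrixP => a b; rewrite EsT_mul !mxE.
by rewrite (inj_eq enum_val_inj).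
Qed.

Lemma EsTEs_disj (S T : {set 'I_n}) : [disjoint S & T] -> (Es S)^T *m Es T = 0.
Proof.
move=> dST; apply/matrixP => a b; rewrite EsT_mul !mxE.
case: eqP => // E; have := disjointFr dST (enum_valP a).
by rewrite E enum_valP.
Qed.

Lemma EsT_eq0 (S : {set 'I_n}) (y : vec n) : ((Es S)^T *m y == 0) = [forall i in S, y i 0 == 0].
Proof.
apply/eqP/forall_inP => [H i iS | H].
  by move/matrixP: H => /(_ (enum_rank_in iS i) 0); rewrite EsT_mul enum_rankK_in // mxE => ->.
by apply/matrixP => a j; rewrite EsT_mul !mxE (ord1 j); apply/eqP/H/enum_valP.
Qed.

Lemma rank_Es (S : {set 'I_n}) : \rank (Es S) = #|S|.
Proof.
apply/eqP; rewrite eqn_leq rank_leq_col /=.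
by rewrite -{1}(mxrank1 'F_2 #|S|) -(EsTEs S) mxrankM_maxr.
Qed.

Lemma mono_sum0 K (U : 'M['F_2]_(n, K)) (v : vec n) (S : {set 'I_n}) :
  (#|S| < K)%N -> \sum_(c : 'cV['F_2]_K) \prod_(i in S) (U *m c + v) i 0 = 0.
Proof.
move=> SK; set B := (Es S)^T *m U.
have : ~~ row_free B^T.
  by rewrite /row_free mxrank_tr; apply: contraL SK => /eqP <-; rewrite -leqNgt rank_leq_row.
case/ker_exists => z z0 zB.
have Bz : forall i, i \in S -> (U *m z^T) i 0 = 0.
  have : (Es S)^T *m (U *m z^T) == 0.
    by rewrite mulmxA -/B -[B]trmxK -trmx_mul zB trmx0.
  by rewrite EsT_eq0 => /forall_inP H i /H /eqP.
apply: (sum_invol (g := fun c => c + z^T)).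
- by move=> c; rewrite mxF2_addK.
- move=> c; apply: contra z0 => /eqP E; rewrite -[z]trmxK -trmx0; apply/eqP; congr trmx.
  by apply: (addrI c); rewrite addr0 E.
- move=> c; apply: eq_bigr => i iS; rewrite mulmxDr [in LHS]mxE [in X in X + _ = _]mxE Bz // addr0.
  by rewrite !mxE.
Qed.

Lemma deg_vanish K (a : {ffun {set 'I_n} -> 'F_2}) (U : 'M['F_2]_(n, K)) v :
  (forall S, a S != 0 -> (#|S| < K)%N) -> Sfv (anf_eval a) U v = 0.
Proof.
move=> Ha; rewrite /Sfv /anf_eval exchange_big /= big1 // => S _.
rewrite -big_distrr /=; case: (eqVneq (a S) 0) => [->|/Ha]; first by rewrite mul0r.
by move/mono_sum0 => ->; rewrite mulr0.
Qed.

Lemma base_indep K (a : {ffun {set 'I_n} -> 'F_2}) (U : 'M['F_2]_(n, K)) v :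
  (forall S, a S != 0 -> (#|S| <= K)%N) -> Sfv (anf_eval a) U v = Sfv (anf_eval a) U 0.
Proof.
move=> Ha; have := @deg_vanish (1 + K) a (row_mx v U) 0.
rewrite /Sfv sum_col_mx sum_cV1 => /(_ Ha) H.
apply: esym; apply: F2_eq_add; rewrite -[RHS]H; congr (_ + _).
  by apply: eq_bigr => c _; rewrite mul_row_col mulmx0 add0r.
apply: eq_bigr => c _; rewrite mul_row_col addr0 addrC; congr (anf_eval a (_ + _)).
by apply/matrixP => i j; rewrite !mxE (ord1 j) big_ord1 mxE mulr1.
Qed.

End Mat.

Section Mat2.
Variable n : nat.

Lemma PL K (U : 'M['F_2]_(n, K)) (S : {set 'I_n}) : #|S| = K ->
  \sum_(c : 'cV['F_2]_K) \prod_(i in S) (U *m c) i 0 = (\rank ((Es S)^T *m U) == K)%:R.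
Proof.
move=> SK; set B := (Es S)^T *m U.
have E : forall c : 'cV['F_2]_K, \prod_(i in S) (U *m c) i 0 = (B *m c == const_mx 1)%:R.
  move=> c; rewrite (prodF2 S (fun i => (U *m c) i 0)); congr ((nat_of_bool _)%:R).
  apply/forall_inP/eqP => [H | H i iS].
    apply/matrixP => a j; rewrite -mulmxA EsT_mul (ord1 j) [const_mx _ _ _]mxE; apply/eqP; apply: H; apply: enum_valP.
  by move/matrixP: H => /(_ (enum_rank_in iS i) 0); rewrite -mulmxA EsT_mul enum_rankK_in // [const_mx _ _ _]mxE => ->.
under eq_bigr => c _ do rewrite E.
case: (boolP (\rank B == K)) => rB.
  have fr : row_free B^T by rewrite /row_free mxrank_tr.
  have fl : row_full B^T by rewrite /row_full mxrank_tr (eqP rB) SK.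
  have /submxP [D HD] : ((const_mx 1 : 'rV['F_2]_#|S|) <= B^T)%MS by apply: submx_full.
  have BD : B *m D^T = const_mx 1 by rewrite -[B]trmxK -trmx_mul -HD trmx_const.
  transitivity (\sum_(c : 'cV['F_2]_K) (c == D^T)%:R : 'F_2); last exact: sum_unique.
  apply: eq_bigr => c _; congr ((nat_of_bool _)%:R).
  apply/eqP/eqP => [Hc | ->] //.
  have : (c - D^T)^T *m B^T == 0 by rewrite -trmx_mul mulmxBr Hc BD subrr trmx0.
  by rewrite mulmx_free_eq0 // trmx_eq0 subr_eq0 => /eqP.
have : ~~ row_free B^T by rewrite /row_free mxrank_tr.
case/ker_exists => z z0 zB.
have Bz : B *m z^T = 0 by rewrite -[B]trmxK -trmx_mul zB trmx0.
apply: (sum_invol (g := fun c => c + z^T)).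
- by move=> c; rewrite mxF2_addK.
- move=> c; apply: contra z0 => /eqP Ez; rewrite -[z]trmxK -trmx0; apply/eqP; congr trmx.
  by apply: (addrI c); rewrite addr0 Ez.
- by move=> c; rewrite mulmxDr Bz addr0.
Qed.

Lemma Sf_hom K (a : {ffun {set 'I_n} -> 'F_2}) (U : 'M['F_2]_(n, K)) :
  (forall S, a S != 0 -> #|S| = K) ->
  Sfv (anf_eval a) U 0 = \sum_S a S * (\rank ((Es S)^T *m U) == K)%:R.
Proof.
move=> Ha; rewrite /Sfv /anf_eval exchange_big; apply: eq_bigr => S _; rewrite -big_distrr /=.
case: (eqVneq (a S) 0) => [->|/Ha SK]; first by rewrite !mul0r.
by under eq_bigr => c _ do rewrite addr0; rewrite PL.
Qed.

Lemma Sf_rank K (a : {ffun {set 'I_n} -> 'F_2}) (U : 'M['F_2]_(n, K)) :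
  (forall S, a S != 0 -> #|S| = K) -> Sfv (anf_eval a) U 0 != 0 -> \rank U = K.
Proof.
move=> Ha; apply: contraNeq => rU; apply/eqP; rewrite Sf_hom // big1 // => S _.
have : (\rank ((Es S)^T *m U) < K)%N.
  apply: leq_ltn_trans (mxrankM_maxr _ _) _.
  by rewrite ltn_neqAle rU rank_leq_col.
by rewrite ltn_neqAle => /andP [/negbTE -> _]; rewrite mulr0.
Qed.

Lemma dual1 p q (U : 'M['F_2]_(n, p)) (U' : 'M['F_2]_(n, q)) (S : {set 'I_n}) :
  (p + q = n)%N -> \rank U = p -> \rank U' = q -> U^T *m U' = 0 -> #|S| = p ->
  \rank ((Es S)^T *m U) != p -> \rank ((Es (~: S))^T *m U') != q.
Proof.
move=> pq rU rU' UU' Sp rB.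
set B := (Es S)^T *m U.
have : ~~ row_free B by apply/negP => /eqP E; move: rB; rewrite E Sp eqxx.
case/ker_exists => w w0 wB.
set y := Es S *m w^T.
have Ey : (Es S)^T *m y = w^T by rewrite mulmxA EsTEs mul1mx.
have y0 : y != 0 by apply: contra w0 => /eqP y0; rewrite -[w]trmxK -Ey y0 mulmx0 trmx0.
have yU : y^T *m U = 0 by rewrite /y trmx_mul trmxK -mulmxA wB.
have sK : (y^T <= kermx U)%MS by rewrite sub_kermx yU.
have U'K : (U'^T <= kermx U)%MS by rewrite sub_kermx -[U'^T *m U]trmxK trmx_mul trmxK UU' trmx0.
have rK : \rank (kermx U) = q by rewrite mxrank_ker rU -pq addKn.
have KU' : (kermx U <= U'^T)%MS.
  have := (mxrank_leqif_eq U'K).2; rewrite mxrank_tr rU' rK eqxx => /esym/andP [].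
  by [].
have /submxP [x Hx] : (y^T <= U'^T)%MS by apply: submx_trans sK KU'.
have x0 : x != 0 by apply: contra y0 => /eqP x0; rewrite -[y]trmxK Hx x0 mul0mx trmx0.
set B' := (Es (~: S))^T *m U'.
have Uy : U' *m x^T = y by rewrite -[y]trmxK Hx trmx_mul trmxK.
have B'x : B' *m x^T = 0.
  by rewrite /B' -mulmxA Uy /y mulmxA EsTEs_disj ?mul0mx // disjoints_subset subxx.
apply/negP => /eqP rB'.
have : row_free B'^T by rewrite /row_free mxrank_tr rB'.
move/(mulmx_free_eq0 x); rewrite -[x *m _]trmxK trmx_mul trmxK B'x trmx0 eqxx.
by move/esym/eqP => E; rewrite E eqxx in x0.
Qed.

Lemma cardsC_eq (S : {set 'I_n}) p q : (p + q = n)%N -> #|S| = p -> #|~: S| = q.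
Proof.
move=> pq Sp; apply/eqP; rewrite -(eqn_add2l p) -{1}Sp cardsC card_ord pq.
by [].
Qed.

Lemma dual p q (U : 'M['F_2]_(n, p)) (U' : 'M['F_2]_(n, q)) (S : {set 'I_n}) :
  (p + q = n)%N -> \rank U = p -> \rank U' = q -> U^T *m U' = 0 -> #|S| = p ->
  (\rank ((Es S)^T *m U) == p) = (\rank ((Es (~: S))^T *m U') == q).
Proof.
move=> pq rU rU' UU' Sp; apply/idP/idP => H.
  apply: contraLR H => H'.
  have := @dual1 q p U' U (~: S).
  rewrite setCK; apply => //; first by rewrite addnC.
    by rewrite -[U'^T *m U]trmxK trmx_mul trmxK UU' trmx0.
  exact: cardsC_eq pq Sp.
by apply: contraLR H; apply: dual1.
Qed.

Lemma Sf_dual p q (a : {ffun {set 'I_n} -> 'F_2}) (U : 'M['F_2]_(n, p)) (U' : 'M['F_2]_(n, q)) :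
  (p + q = n)%N -> \rank U = p -> \rank U' = q -> U^T *m U' = 0 ->
  (forall S, a S != 0 -> #|S| = p) ->
  Sfv (anf_eval [ffun S => a (~: S)]) U' 0 = Sfv (anf_eval a) U 0.
Proof.
move=> pq rU rU' UU' Ha.
have Hc : forall S, [ffun S => a (~: S)] S != 0 -> #|S| = q.
  move=> S; rewrite ffunE => /Ha Sp; have := cardsC_eq pq Sp.
  by rewrite setCK.
rewrite (Sf_hom U' Hc) (Sf_hom U Ha) (reindex_inj (@setC_inj _)) /=.
apply: eq_bigr => S _; rewrite ffunE setCK; case: (eqVneq (a S) 0) => [->|/Ha Sp]; first by rewrite !mul0r.
by rewrite (dual pq rU rU' UU' Sp).
Qed.

Lemma count_sub r (B : 'M['F_2]_(r, n)) : row_free B ->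
  #|[set Y : 'M['F_2]_(r, n) | row_free Y && (Y <= B)%MS]| = #|[set G : 'M['F_2]_r | G \in unitmx]|.
Proof.
move=> fB; rewrite -(card_imset _ (row_free_inj fB)).
apply: eq_card => Y; rewrite inE.
apply/andP/imsetP => [[fY /submxP [D eY]] | [G]].
  exists D => //; rewrite inE -row_free_unit; by move: fY; rewrite /row_free eY mxrankMfree.
rewrite inE => uG ->; split; last exact: submxMl.
by rewrite /row_free mxrankMfree // mxrank_unit.
Qed.

Lemma count_perp p q (A : 'M['F_2]_(n, p)) : (p + q = n)%N -> \rank A = p ->
  #|[set X : 'M['F_2]_(n, q) | (\rank X == q) && (A^T *m X == 0)]| = #|[set G : 'M['F_2]_q | G \in unitmx]|.
Proof.
move=> pq rA.
have -> : #|[set X : 'M['F_2]_(n, q) | (\rank X == q) && (A^T *m X == 0)]| =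
          #|[set Y : 'M['F_2]_(q, n) | row_free Y && (Y <= kermx A)%MS]|.
  rewrite !card_set_sum (reindex (@trmx _ q n)) /=; last by exists (@trmx _ n q) => Y _; rewrite trmxK.
  apply: eq_bigr => Y _; rewrite /row_free mxrank_tr sub_kermx -trmx_mul trmx_eq0.
  by [].
have rK : \rank (kermx A) = q by rewrite mxrank_ker rA -pq addKn.
move: (row_base (kermx A)) (row_base_free (kermx A)) (eq_row_base (kermx A)).
rewrite rK => B fB eB; rewrite -(count_sub fB).
by apply: eq_card => Y; rewrite !inE eB.
Qed.

End Mat2.

Lemma card_unitmx m : (0 < m)%N ->
  #|[set G : 'M['F_2]_m | G \in unitmx]| = (2 ^ 'C(m, 2) * \prod_(1 <= i < m.+1) (2 ^ i - 1))%N.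
Proof.
case: m => // m _.
have -> : (2 ^ 'C(m.+1, 2) * \prod_(1 <= i < m.+2) (2 ^ i - 1))%N = #|GLgroup m.+1 'F_2|.
  by rewrite card_GL // card_F2.
rewrite cardsT /= card_sub; by apply: eq_card => A; rewrite inE.
Qed.

Section Trans.
Variable n : nat.

Definition mat K (u : {ffun 'I_K -> vec n}) : 'M['F_2]_(n, K) := \matrix_(i, j) u j i 0.

Lemma kderivE K (f : boolfun n) (u0 : vec n) (u : {ffun 'I_K -> vec n}) :
  kderiv f u0 u = Sfv f (mat u) u0.
Proof.
rewrite /kderiv /Sfv (reindex (fun c : 'cV['F_2]_K => [ffun j => c j 0])) /=; last first.
  exists (fun c : {ffun 'I_K -> 'F_2} => \col_j c j) => [c _|c _].
    by apply/matrixP => i j; rewrite !mxE ffunE (ord1 j).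
  by apply/ffunP => j; rewrite !ffunE mxE.
apply: eq_bigr => c _; congr (f (_ + _)).
apply/matrixP => i j; rewrite summxE !mxE (ord1 j); apply: eq_bigr => l _.
by rewrite ffunE !mxE mulrC.
Qed.

Lemma Sfv_ext K (f g : boolfun n) (U : 'M['F_2]_(n, K)) v :
  (forall x, f x = g x) -> Sfv f U v = Sfv g U v.
Proof. by move=> H; apply: eq_bigr => c _; rewrite H. Qed.

Lemma dt_sum K (f : boolfun n) :
  dt K f = (\sum_(u0 : vec n) \sum_(U : 'M['F_2]_(n, K)) (Sfv f U u0 != 0%R))%N%:R
           / (2 ^ ((K + 1) * n))%N%:R.
Proof.
rewrite /dt card_set_sum.
rewrite -(pair_big predT predT (fun (u0 : vec n) (u : {ffun 'I_K -> vec n}) => nat_of_bool (kderiv f u0 u != 0))) /=.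
congr (_%:R / _); apply: eq_bigr => u0 _.
rewrite (reindex (@mat K)) /=; last first.
  exists (fun U : 'M['F_2]_(n, K) => [ffun j => col j U]) => [u _|U _].
    by apply/ffunP => j; rewrite ffunE; apply/matrixP => i l; rewrite !mxE (ord1 l).
  by apply/matrixP => i j; rewrite !mxE ffunE mxE.
by apply: eq_bigr => u _; rewrite kderivE.
Qed.

Lemma card_vec m p : #|{: 'M['F_2]_(m, p)}| = (2 ^ (m * p))%N.
Proof. by rewrite card_mx card_F2. Qed.

End Trans.

Section Rows.
Variable n : nat.

Definition rjoin m (A : 'M['F_2]_(n, m)) (r : 'rV['F_2]_m) : 'M['F_2]_(n.+1, m) :=
  \matrix_(i, j) if unlift ord_max i is Some i' then A i' j else r 0 j.

Lemma widen_lift (i : 'I_n) : widen_ord (leqnSn n) i = lift ord_max i.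
Proof. by apply: val_inj; rewrite /= /bump leqNgt ltn_ord. Qed.

Lemma rjoin_top m A r (i : 'I_n) j : @rjoin m A r (widen_ord (leqnSn n) i) j = A i j.
Proof. by rewrite mxE widen_lift liftK. Qed.
Lemma rjoin_bot m A r j : @rjoin m A r ord_max j = r 0 j.
Proof. by rewrite mxE unlift_none. Qed.

Lemma sum_rows m (F : 'M['F_2]_(n.+1, m) -> nat) :
  (\sum_(X : 'M['F_2]_(n.+1, m)) F X = \sum_(A : 'M['F_2]_(n, m)) \sum_(r : 'rV['F_2]_m) F (rjoin A r))%N.
Proof.
rewrite pair_bigA /= (reindex (fun pr : 'M['F_2]_(n, m) * 'rV['F_2]_m => rjoin pr.1 pr.2)) //=.
exists (fun X : 'M['F_2]_(n.+1, m) => (\matrix_(i < n, j < m) X (widen_ord (leqnSn n) i) j, \row_j X ord_max j)).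
  move=> [A r] _ /=; congr (_, _); apply/matrixP => i j; rewrite !mxE.
    by rewrite widen_lift liftK.
  by rewrite (ord1 i) unlift_none.
move=> X _; apply/matrixP => i j; rewrite !mxE.
case: unliftP => [i' ->|->] //=.
by rewrite mxE widen_lift.
Qed.

Lemma rjoin_mul m p (A : 'M['F_2]_(n, m)) r (B : 'M['F_2]_(m, p)) :
  rjoin A r *m B = rjoin (A *m B) (r *m B).
Proof.
apply/matrixP => i j; rewrite !mxE; case: unliftP => [i' ->|->] /=.
  by rewrite mxE; apply: eq_bigr => l _; rewrite mxE liftK.
by apply: eq_bigr => l _; rewrite mxE unlift_none.
Qed.

Lemma rjoin_add m A r A' r' : @rjoin m A r + rjoin A' r' = rjoin (A + A') (r + r').
Proof. by apply/matrixP => i j; rewrite !mxE; case: (unlift ord_max i) => [i'|]; rewrite ?mxE. Qed.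

Lemma extend_rjoin (f : boolfun n) (x : vec n) (y : 'rV['F_2]_1) :
  extend_mul f (rjoin x y) = y 0 0 * f x.
Proof.
rewrite /extend_mul rjoin_bot; congr (_ * f _).
by apply/matrixP => i j; rewrite !mxE (ord1 j) widen_lift liftK.
Qed.

End Rows.

Lemma sum_row_mx (m p1 p2 : nat) (F : 'M['F_2]_(m, p1 + p2) -> nat) :
  (\sum_(V : 'M['F_2]_(m, p1 + p2)) F V = \sum_(V1 : 'M['F_2]_(m, p1)) \sum_(V2 : 'M['F_2]_(m, p2)) F (row_mx V1 V2))%N.
Proof.
rewrite pair_bigA /= (reindex (fun pr : 'M['F_2]_(m, p1) * 'M['F_2]_(m, p2) => row_mx pr.1 pr.2)) //=.
exists (fun V => (lsubmx V, rsubmx V)) => [[x y] _|V _] /=.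
  by rewrite row_mxKl row_mxKr.
by rewrite hsubmxK.
Qed.

Lemma col_mx00 k (x : 'cV['F_2]_1) (y : 'cV['F_2]_k) : col_mx x y (0 : 'I_k.+1) 0 = x 0 0.
Proof.
have -> : (0 : 'I_k.+1) = lshift k (0 : 'I_1) by apply: ord_inj.
by rewrite col_mxEu.
Qed.

Lemma unit11 (C : 'M['F_2]_1) : C \in unitmx -> C = 1%:M.
Proof.
rewrite unitmxE det_mx11 unitfE => /F2_neq0 C1.
by apply/matrixP => i j; rewrite !ord1 C1 mxE.
Qed.

Section PartI.
Variables (n k : nat) (f : boolfun n).
Hypothesis Hd : forall S, anf f S != 0 -> (#|S| <= k)%N.

Definition Lam (V : 'M['F_2]_(n, k.+1)) (v0 : vec n) (b : 'rV['F_2]_k.+1) : 'F_2 :=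
  \sum_(c : 'cV['F_2]_k.+1) (b *m c) 0 0 * f (V *m c + v0).

Lemma Sfv_f0 (V : 'M['F_2]_(n, k.+1)) v0 : Sfv f V v0 = 0.
Proof.
rewrite (Sfv_ext _ _ (fun x => esym (anf_evalK f x))).
by apply: deg_vanish => S /Hd; rewrite ltnS.
Qed.

Lemma Sfv_g V b v0 b0 : Sfv (extend_mul f) (rjoin V b) (rjoin v0 b0) = Lam V v0 b.
Proof.
rewrite /Sfv; under eq_bigr => c _ do rewrite rjoin_mul rjoin_add extend_rjoin.
under eq_bigr => c _ do rewrite mxE mulrDl.
by rewrite big_split /= -big_distrr /= -/(Sfv f V v0) Sfv_f0 mulr0 addr0.
Qed.

Lemma Lam_G (G : 'M['F_2]_k.+1) V v0 b : G \in unitmx -> Lam V v0 b = Lam (V *m G) v0 (b *m G).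
Proof.
move=> uG; rewrite /Lam (reindex_inj (can_inj (mulKmx uG))) /=.
by apply: eq_bigr => c _; rewrite !mulmxA.
Qed.

Definition Cb (b : 'rV['F_2]_k.+1) : nat :=
  (\sum_(v0 : vec n) \sum_(V : 'M['F_2]_(n, k.+1)) (Lam V v0 b != 0%R))%N.

Lemma Cb_G (G : 'M['F_2]_k.+1) b : G \in unitmx -> Cb b = Cb (b *m G).
Proof.
move=> uG; rewrite /Cb; apply: eq_bigr => v0 _.
rewrite [RHS](reindex_inj (can_inj (mulmxK uG))) /=.
by apply: eq_bigr => V _; rewrite -Lam_G.
Qed.

Lemma Cb0 : Cb 0 = 0%N.
Proof.
rewrite /Cb big1 // => v0 _; rewrite big1 // => V _.
by rewrite /Lam big1 ?eqxx // => c _; rewrite mul0mx mxE mul0r.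
Qed.

Lemma Cb_nz b : b != 0 -> Cb b = Cb (pid_mx 1).
Proof.
move=> b0.
have rb : \rank b = 1%N.
  apply/eqP; rewrite eqn_leq rank_leq_row lt0n mxrank_eq0 b0.
  by [].
have eb := mulmx_ebase b; rewrite rb (unit11 (col_ebase_unit b)) mul1mx in eb.
have uR : invmx (row_ebase b) \in unitmx by rewrite unitmx_inv row_ebase_unit.
rewrite (Cb_G b uR).
by rewrite -{1}eb mulmxK // row_ebase_unit.
Qed.

Lemma pid_mul (c : 'cV['F_2]_k.+1) : ((pid_mx 1 : 'rV['F_2]_k.+1) *m c) 0 0 = c 0 0.
Proof.
rewrite mxE (bigD1 ord0) //= big1 ?addr0; first by rewrite mxE /= mul1r.
by move=> j /negbTE nj; rewrite mxE /=; case: j nj => [[|j'] Hj] //= _; rewrite mul0r.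
Qed.

Definition Zf := (\sum_(v0 : vec n) \sum_(V : 'M['F_2]_(n, k)) (Sfv f V v0 != 0%R))%N.

Lemma Cb_e : Cb (pid_mx 1) = (2 ^ n * Zf)%N.
Proof.
rewrite /Cb.
transitivity (\sum_(v0 : vec n) \sum_(V1 : 'M['F_2]_(n, 1)) \sum_(V' : 'M['F_2]_(n, k)) (Sfv f V' (V1 + v0)%R != 0%R))%N.
  apply: eq_bigr => v0 _; rewrite (sum_row_mx (p1 := 1) (p2 := k)); apply: eq_bigr => V1 _.
  apply: eq_bigr => V' _; congr (nat_of_bool (_ != 0)).
  rewrite /Lam /Sfv (sum_col_mx (m1 := 1) (m2 := k)) sum_cV1 big1 ?add0r; last first.
    by move=> y _; rewrite pid_mul col_mx00 mxE mul0r.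
  apply: eq_bigr => y _; rewrite pid_mul col_mx00 mxE mul1r (mul_row_col V1 V'); congr f.
  rewrite addrAC addrC; congr (_ + _).
  by apply/matrixP => i j; rewrite !mxE (ord1 j) big_ord1 mxE mulr1.
rewrite exchange_big /=.
transitivity (\sum_(V1 : 'M['F_2]_(n, 1)) Zf)%N; last by rewrite sum_nat_const card_vec muln1.
by apply: eq_bigr => V1 _; rewrite /Zf [RHS](reindex_inj (addrI V1)).
Qed.

End PartI.

Lemma arith1 n k (Z : nat) :
  ((2 * ((2 ^ k.+1 - 1) * (2 ^ n * Z)))%N%:R / (2 ^ ((k.+1 + 1) * n.+1))%N%:R : rat) =
  (1 - ((2 ^ k.+1)%N%:R)^-1) * (Z%:R / (2 ^ ((k + 1) * n))%N%:R).
Proof.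
rewrite (_ : ((k.+1 + 1) * n.+1 = 1 + k.+1 + n + (k + 1) * n)%N); last by nia.
rewrite !expnD expn1 !natrM natrB ?expn_gt0 //.
have h2 : (2%:R : rat) != 0 by [].
field; by rewrite !pnatr_eq0 !expn_eq0.
Qed.

Lemma part1 n k (f : boolfun n) : alg_deg f = k ->
  dt k.+1 (extend_mul f) = (1 - ((2 ^ k.+1)%N%:R)^-1) * dt k f.
Proof.
move=> hdeg.
have Hd : forall S, anf f S != 0 -> (#|S| <= k)%N.
  by move=> S HS; rewrite -hdeg /alg_deg; apply: (@leq_bigmax_cond _ (fun S => anf f S != 0) (fun S => #|S|) S HS).
rewrite !dt_sum -[X in _ = _ * (X%:R / _)]/(@Zf n k f) -arith1; congr (_%:R / _).
rewrite sum_rows.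
transitivity (\sum_(v0 : 'M['F_2]_(n, 1)) \sum_(b0 : 'rV['F_2]_1)
               \sum_(V : 'M['F_2]_(n, k.+1)) \sum_(b : 'rV['F_2]_k.+1) (Lam f V v0 b != 0%R))%N.
  apply: eq_bigr => v0 _; apply: eq_bigr => b0 _; rewrite sum_rows; apply: eq_bigr => V _.
  by apply: eq_bigr => b _; rewrite Sfv_g.
under eq_bigr => v0 _ do rewrite sum_nat_const card_vec.
rewrite -big_distrr /= muln1 expn1; congr (2 * _)%N.
under eq_bigr => v0 _ do rewrite exchange_big /=.
rewrite exchange_big /=.
rewrite (bigD1 0) //= -/(@Cb n k f 0) (@Cb0 n k f) add0n.
under eq_bigr => b Hb do rewrite -/(@Cb n k f b) (@Cb_nz n k f b Hb) (@Cb_e n k f).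
by rewrite sum_nat_const cardC1 card_vec mul1n subn1.
Qed.

Definition Gc m := #|[set M : 'M['F_2]_m | M \in unitmx]|.

Lemma Gc_formula_aux m :
  ((2 ^ 'C(m, 2) * \prod_(1 <= i < m.+1) (2 ^ i - 1))%N%:R : rat) =
  2%:R ^+ (m * m) * \prod_(1 <= i < m.+1) (1 - ((2 ^ i)%N%:R)^-1).
Proof.
elim: m => [|m IH]; first by rewrite !big_geq // mul1r.
rewrite big_nat_recr //= [in RHS]big_nat_recr //= binS bin1 expnD mulnACA natrM IH.
rewrite natrM natrB ?expn_gt0 // !natrX.
rewrite (_ : (m.+1 * m.+1 = m * m + m + m.+1)%N); last by nia.
rewrite !exprD.
have h2 : (2%:R : rat) != 0 by [].
field; by rewrite ?expf_neq0.
Qed.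

Lemma Gc_formula m : (0 < m)%N ->
  (Gc m)%:R = 2%:R ^+ (m * m) * \prod_(1 <= i < m.+1) (1 - ((2 ^ i)%N%:R)^-1) :> rat.
Proof. by move=> m0; rewrite /Gc card_unitmx // Gc_formula_aux. Qed.

Lemma Gc_gt0 m : (0 < m)%N -> (0 < Gc m)%N.
Proof. by move=> _; apply/card_gt0P; exists 1%:M; rewrite inE unitmx1. Qed.


Lemma Es_mul_in n (S : {set 'I_n}) m (w : 'M['F_2]_(#|S|, m)) a j : (Es S *m w) (enum_val a) j = w a j.
Proof.
rewrite mxE (bigD1 a) //= mxE eqxx mul1r big1 ?addr0 // => b /negbTE nb.
by rewrite mxE (inj_eq enum_val_inj) eq_sym nb mul0r.
Qed.

Lemma rank_unitM n p (M : 'M['F_2]_n) (B : 'M['F_2]_(n, p)) : M \in unitmx -> \rank (M *m B) = \rank B.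
Proof.
move=> uM; apply/eqP; rewrite eqn_leq mxrankM_maxr /=.
by rewrite -{1}(mulKmx uM B) mxrankM_maxr.
Qed.

Lemma mob_Es n (g : boolfun n) (S : {set 'I_n}) :
  mob g S = \sum_(c : 'cV['F_2]_#|S|) g (Es S *m c).
Proof.
rewrite ffunE (reindex (@supp n)) /=; last first.
  by exists (@ind n) => [x _|T _]; rewrite ?ind_supp ?supp_ind.
under eq_bigr => x _ do rewrite ind_supp.
rewrite (reindex (fun c : 'cV['F_2]_#|S| => Es S *m c)) /=; last first.
  exists (fun x : vec n => (Es S)^T *m x) => [c _|x]; first by rewrite mulmxA EsTEs mul1mx.
  rewrite inE => /subsetP sx; apply/matrixP => i j; rewrite (ord1 j).
  case: (boolP (i \in S)) => iS.
    by rewrite -(enum_rankK_in iS iS) Es_mul_in EsT_mul.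
  rewrite Es_mul_out //; apply: esym; apply: F2_neq1; apply: contra iS => xi.
  by apply: sx; rewrite inE.
apply: eq_bigl => c; apply/subsetP => i; rewrite inE; apply: contraLR => iS.
by rewrite Es_mul_out.
Qed.

Lemma anf_affine n (F : boolfun n) (M : 'M['F_2]_n) v (S : {set 'I_n}) :
  anf (affine_comp F M v) S = Sfv F (M *m Es S) v.
Proof. by rewrite anfE mob_Es /Sfv; apply: eq_bigr => c _; rewrite /affine_comp mulmxA. Qed.

Section PartII.
Variables (n k : nat) (f : boolfun n).
Hypothesis hk : (1 <= k)%N.
Hypothesis hkn : (2 * k <= n)%N.
Hypothesis Hh : forall S, anf f S != 0 -> #|S| = k.

Local Notation a := (anf f).
Local Notation ac := [ffun S : {set 'I_n} => anf f (~: S)].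
Local Notation q := (n - k)%N.

Lemma kn : (k <= n)%N. Proof. by apply: leq_trans hkn; rewrite leq_pmull. Qed.
Lemma kq : (k <= q)%N. Proof. by rewrite leq_subRL ?kn // addnn -mul2n. Qed.
Lemma pq : (k + q = n)%N. Proof. by rewrite subnKC ?kn. Qed.

Lemma Hc : forall S, ac S != 0 -> #|S| = q.
Proof. by move=> S; rewrite ffunE => /Hh Sp; have := cardsC_eq pq Sp; rewrite setCK. Qed.

Lemma Sfv_fE K (U : 'M['F_2]_(n, K)) v : (k <= K)%N -> Sfv f U v = Sfv (anf_eval a) U 0.
Proof.
move=> kK; rewrite (Sfv_ext _ _ (fun x => esym (anf_evalK f x))) base_indep // => S /Hh ->.
by [].
Qed.

Lemma Sfv_fcE K (U : 'M['F_2]_(n, K)) v : (q <= K)%N -> Sfv (complement f) U v = Sfv (anf_eval ac) U 0.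
Proof. by move=> qK; rewrite /complement base_indep // => S /Hc ->. Qed.

Definition Af := (\sum_(U : 'M['F_2]_(n, k)) (Sfv (anf_eval a) U 0%R != 0%R))%N.
Definition Afc := (\sum_(U : 'M['F_2]_(n, q)) (Sfv (anf_eval ac) U 0%R != 0%R))%N.

Lemma dcount : (Af * Gc q = Afc * Gc k)%N.
Proof.
have PP : forall (U : 'M['F_2]_(n, k)) (U' : 'M['F_2]_(n, q)),
    [&& Sfv (anf_eval a) U 0 != 0, \rank U' == q & U^T *m U' == 0] =
    [&& Sfv (anf_eval ac) U' 0 != 0, \rank U == k & U'^T *m U == 0].
  move=> U U'; apply/and3P/and3P => [[h1 /eqP h2 /eqP h3] | [h1 /eqP h2 /eqP h3]].
    have rU := Sf_rank Hh h1.
    rewrite (Sf_dual pq rU h2 h3 Hh) h1 rU eqxx; split => //.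
    by rewrite -trmx_eq0 trmx_mul trmxK h3.
  have rU' := Sf_rank Hc h1.
  have h3' : U^T *m U' = 0 by apply/eqP; rewrite -trmx_eq0 trmx_mul trmxK h3.
  by rewrite -(Sf_dual pq h2 rU' h3' Hh) h1 rU' eqxx h3' eqxx.
transitivity (\sum_(U : 'M['F_2]_(n, k)) \sum_(U' : 'M['F_2]_(n, q))
   [&& Sfv (anf_eval a) U 0%R != 0%R, \rank U' == q & U^T *m U' == 0%R])%N.
  rewrite /Af big_distrl /=; apply: eq_bigr => U _.
  case: (boolP (Sfv (anf_eval a) U 0 != 0)) => h1 /=; last by rewrite mul0n big1.
  rewrite mul1n -card_set_sum; apply: esym; apply: count_perp pq _.
  exact: Sf_rank Hh h1.
under eq_bigr => U _ do under eq_bigr => U' _ do rewrite PP.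
rewrite exchange_big /= /Afc big_distrl /=; apply: eq_bigr => U' _.
case: (boolP (Sfv (anf_eval ac) U' 0 != 0)) => h1 /=; last by rewrite mul0n big1.
rewrite mul1n -card_set_sum; apply: (count_perp _ (Sf_rank Hc h1)).
by rewrite addnC pq.
Qed.

Lemma dt_f : dt k f = ((2 ^ n * Af)%N)%:R / (2 ^ ((k + 1) * n))%N%:R.
Proof.
rewrite dt_sum; congr (_%:R / _).
under eq_bigr => u0 _ do under eq_bigr => U _ do rewrite (Sfv_fE U u0 (leqnn k)).
by rewrite sum_nat_const card_vec muln1.
Qed.

Lemma dt_fc : dt q (complement f) = ((2 ^ n * Afc)%N)%:R / (2 ^ ((q + 1) * n))%N%:R.
Proof.
rewrite dt_sum; congr (_%:R / _).
under eq_bigr => u0 _ do under eq_bigr => U _ do rewrite (Sfv_fcE U u0 (leqnn q)).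
by rewrite sum_nat_const card_vec muln1.
Qed.

Lemma dt_part :
  dt q (complement f) = dt k f * \prod_(k.+1 <= i < (n.+1 - k)%N) (1 - ((2 ^ i)%N%:R)^-1 : rat).
Proof.
rewrite dt_f dt_fc subSn ?kn //.
set P2 := \prod_(k.+1 <= i < q.+1) _.
have hq : (0 < q)%N by apply: leq_trans hk kq.
have Gk := Gc_formula hk; have Gq := Gc_formula hq.
rewrite (@big_cat_nat _ _ _ k.+1) //= in Gq; last by rewrite ltnS kq.
set P1 := \prod_(1 <= i < k.+1) _ in Gk Gq.
rewrite -/P2 in Gq.
have := dcount; move/(congr1 (fun x : nat => x%:R : rat)); rewrite !natrM => E.
have Gk0 : (Gc k)%:R != 0 :> rat by rewrite pnatr_eq0 -lt0n Gc_gt0.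
have P10 : P1 != 0 by apply: contraNneq Gk0 => P0; rewrite Gk P0 mulr0.
have EA : (Afc%:R : rat) = Af%:R * 2%:R ^+ (q * q) * P2 / 2%:R ^+ (k * k).
  apply: (mulIf Gk0); rewrite -E Gq Gk; field.
  by rewrite expf_neq0.
rewrite EA !natrX.
set d := (q - k)%N.
have E1 : (q * q = k * k + d * n)%N by have := pq; have := kq; rewrite /d; nia.
have E2 : ((q + 1) * n = (k + 1) * n + d * n)%N by have := pq; have := kq; rewrite /d; nia.
rewrite E1 E2 !exprD.
have h2 : (2%:R : rat) != 0 by [].
field; by rewrite ?expf_neq0.
Qed.


Definition hM (M : 'M['F_2]_n) := (invmx M)^T.

Lemma hM_invol : involutive hM.
Proof. by move=> M; rewrite /hM trmx_inv trmxK invmxK. Qed.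

Lemma hM_unit M : (hM M \in unitmx) = (M \in unitmx).
Proof. by rewrite /hM unitmx_tr unitmx_inv. Qed.

Lemma anf_dual (M : 'M['F_2]_n) v (S : {set 'I_n}) : M \in unitmx -> #|S| = k ->
  anf (affine_comp (complement f) (hM M) v) (~: S) = anf (affine_comp f M v) S.
Proof.
move=> uM Sk.
have Sq : #|~: S| = q by apply: cardsC_eq pq Sk.
rewrite !anf_affine (Sfv_fcE _ _ (eq_leq (esym Sq))) (Sfv_fE _ _ (eq_leq (esym Sk))).
have pq' : (#|S| + #|~: S| = n)%N by rewrite cardsC card_ord.
have Ha : forall R, a R != 0 -> #|R| = #|S| by move=> R /Hh ->.
apply: (Sf_dual pq').
- by rewrite rank_unitM ?rank_Es.
- by rewrite rank_unitM ?rank_Es ?hM_unit.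
- rewrite trmx_mul /hM -mulmxA (mulmxA M^T) -trmx_mul mulVmx // trmx1 mul1mx.
  by rewrite EsTEs_disj // disjoints_subset setCK subxx.
- exact: Ha.
Qed.

Lemma ddk_dual (M : 'M['F_2]_n) v : M \in unitmx ->
  ddk q (affine_comp (complement f) (hM M) v) = ddk k (affine_comp f M v).
Proof.
move=> uM; rewrite /ddk bin_sub ?kn //; congr (_%:R / _).
rewrite !card_set_sum (reindex_inj (@setC_inj _)) /=; apply: eq_bigr => S _.
have pq' : (#|S| + #|~: S| = n)%N by rewrite cardsC card_ord.
case: (eqVneq #|S| k) => [Sk|nSk].
  by rewrite (cardsC_eq pq Sk) eqxx anf_dual.
have -> : (#|~: S| == q) = false.
  by apply/negbTE; apply: contra nSk => /eqP E; apply/eqP; move: pq' kn; rewrite E; lia.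
by [].
Qed.

Lemma addk_part : addk q (complement f) = addk k f.
Proof.
rewrite /addk; congr (_ / _).
rewrite (reindex_inj (inv_inj hM_invol)) /=.
apply: eq_big => [M|M uM]; first by rewrite hM_unit.
by apply: eq_bigr => v _; rewrite ddk_dual // -hM_unit.
Qed.

End PartII.

Theorem proposition2 :
  (forall (n k : nat) (f : boolfun n),
      (1 <= k)%N -> (k <= n)%N -> alg_deg f = k ->
      dt k.+1 (extend_mul f) = (1 - ((2 ^ k.+1)%N%:R)^-1) * dt k f)
  /\
  (forall (n k : nat) (f : boolfun n),
      (1 <= k)%N -> (2 * k <= n)%N -> homogeneous k f ->
      addk (n - k)%N (complement f) = addk k f /\
      dt (n - k)%N (complement f) =
        dt k f * \prod_(k.+1 <= i < (n.+1 - k)%N) (1 - ((2 ^ i)%N%:R)^-1 : rat)).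
Proof.
split; first by move=> n k f _ _; apply: part1.
move=> n k f hk hkn [_ Hh].
by split; [apply: addk_part | apply: dt_part].
Qed.
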